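(* For all positive integers $m,n$, \[ \overline{ {m+n \brack n }}_{q,t} = { m+n \brack n }_{q}\; {}_{2}\phi_{1} ( q^{-n}, q^{-m} ; q^{-n-m} ; q, -tq). \]
   Context: An overpartition is a partition in which the last occurrence of each distinct part size may be overlined; its weight $|\lambda|$ is the sum of its parts. $\overline{{m+n \brack n}}_{q,t}=\sum_{\lambda} t^{\#_o(\lambda)} q^{|\lambda|}$, the sum over all overpartitions $\lambda$ with largest part at most $m$ and at most $n$ parts, $\#_o(\lambda)$ being the number of overlined parts. ${m+n \brack n}_q=\frac{(q;q)_{m+n}}{(q;q)_m(q;q)_n}$ is the Gaussian polynomial, with $(a;q)_k=\prod_{j=1}^k(1-aq^{j-1})$. The basic hypergeometric series is ${}_{2}\phi_{1}(a_1,a_2;b_1;q,z)=\sum_{k\ge0}\frac{(a_1;q)_k(a_2;q)_k}{(q;q)_k(b_1;q)_k}z^k$ (here terminating, since $(q^{-n};q)_k=0$ for $k>n$). *)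

(* Defs.v *)
From HB Require Import structures.
From mathcomp Require Import all_boot all_order all_algebra.
Set Implicit Arguments. Unset Strict Implicit. Unset Printing Implicit Defensive.
Import Order.TTheory GRing.Theory Num.Theory.
Local Open Scope ring_scope.

Section Defs.
Variable F : fieldType.

Definition qpoch (a q : F) (k : nat) : F := \prod_(j < k) (1 - a * q ^+ j).

Definition gauss_binom (q : F) (m n : nat) : F :=
  qpoch q q (m + n) / (qpoch q q m * qpoch q q n).

Definition phi21 (N : nat) (a1 a2 b1 q z : F) : F :=
  \sum_(k < N.+1) (qpoch a1 q k * qpoch a2 q k) / (qpoch q q k * qpoch b1 q k) * z ^+ k.

(* Overpartitions with largest part <= m and at most n parts: an underlying
   partition is a nonincreasing n-tuple of parts in {0..m} (zeros = padding);
   the overlining is a set S of distinct (positive) part sizes occurring in it. *)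
Definition overpart_gf (m n : nat) (q t : F) : F :=
  \sum_(l : n.-tuple 'I_m.+1 | sorted geq (map val l))
    \sum_(S : {set 'I_m.+1} | [forall s in S, (0 < val s)%N && (s \in l)])
      t ^+ #|S| * q ^+ (\sum_(i <- l) val i)%N.
End Defs.

(* Main.v *)
Require Import Defs.
From HB Require Import structures.
From mathcomp Require Import all_boot all_order all_algebra.
From mathcomp Require Import ring zify.
Set Implicit Arguments. Unset Strict Implicit. Unset Printing Implicit Defensive.
Import GRing.Theory.
Local Open Scope ring_scope.

Section Alg.
Variable F : fieldType.
Variables q t : F.
Variable M : nat.
Hypothesis hq0 : q != 0.
Hypothesis hq : forall j : nat, (0 < j <= M)%N -> q ^+ j != 1.
Local Notation P := (qpoch q q).

Lemma PS j : P j.+1 = P j * (1 - q ^+ j.+1).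
Proof. by rewrite /qpoch big_ord_recr /= exprS. Qed.
Lemma P0 : P 0 = 1. Proof. by rewrite /qpoch big_ord0. Qed.

Lemma facnz j : (j < M)%N -> 1 - q * q ^+ j != 0.
Proof. by move=> h; rewrite -exprS subr_eq0 eq_sym hq //; lia. Qed.

Lemma Pnz j : (j <= M)%N -> P j != 0.
Proof.
elim: j => [|j IH] h; first by rewrite P0 oner_eq0.
rewrite PS mulf_neq0 //; first by apply: IH; lia.
by rewrite exprS facnz //; lia.
Qed.

Fixpoint qT (k : nat) : F := if k is k'.+1 then qT k' * q ^+ k'.+1 else 1.
Definition X a b k := qT k * P (a + b + k) / (P a * P b * P k).
Definition C m n k := if (k <= m)%N && (k <= n)%N then X (n - k) (m - k) k else 0.

Lemma qTnz k : qT k != 0.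
Proof. elim: k => [|k IH] /=; first exact: oner_neq0. by rewrite mulf_neq0 // expf_neq0. Qed.

Ltac sidec := repeat (apply/andP; split); first [ apply: qTnz | apply: hq0 | apply: Pnz; lia | apply: facnz; lia | idtac ].

Lemma Xrec a b k : (a + b + k < M)%N ->
  X a b k.+1 = (if b is b'.+1 then X a b' k.+1 else 0) +
    q ^+ (b + k.+1) * ((if a is a'.+1 then X a' b k.+1 else 0) + X a b k).
Proof.
move=> h; case: a h => [|a] h; case: b h => [|b] h; rewrite /X /= ?addn0 ?add0n ?P0;
rewrite ?addSn ?addnS !PS ?exprS ?exprD; field; sidec.
Qed.

Lemma C_eq m n k a b : m = (k + b)%N -> n = (k + a)%N -> C m n k = X a b k.
Proof. by move=> -> ->; rewrite /C !leq_addr /= !addKn. Qed.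
Lemma C_0 m n k : ((m < k) || (n < k))%N -> C m n k = 0.
Proof. by move=> h; rewrite /C; case: ifP => //; lia. Qed.

Lemma Crec m n k : (m + n + 2 <= M)%N ->
  C m.+1 n.+1 k = C m n.+1 k + q ^+ m.+1 * (C m.+1 n k + (if k is k'.+1 then C m n k' else 0)).
Proof.
move=> h; case: k => [|k].
  rewrite /C !leq0n /= !subn0 /X /= !addn0 !P0.
  rewrite !addSn !addnS !PS !exprS !exprD; field; sidec.
case: (boolP ((k <= m) && (k <= n))%N) => [/andP[km kn]|H]; last first.
  by rewrite !C_0 ?add0r ?mulr0 //; lia.
have [b eb] : exists b, m = (k + b)%N by exists (m - k)%N; lia.
have [a ea] : exists a, n = (k + a)%N by exists (n - k)%N; lia.
rewrite (@C_eq m.+1 n.+1 k.+1 a b) ?(@C_eq m n k a b) //; try lia.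
have -> : q ^+ m.+1 = q ^+ (b + k.+1) by congr (_ ^+ _); lia.
rewrite Xrec; last by lia.
congr (_ + _ * (_ + _)).
  case: b eb => [|b] eb; first by rewrite C_0 //; lia.
  by rewrite (@C_eq m n.+1 k.+1 a b) //; lia.
case: a ea => [|a] ea; first by rewrite C_0 //; lia.
by rewrite (@C_eq m.+1 n k.+1 a b) //; lia.
Qed.

Fixpoint G (m : nat) : nat -> F :=
  if m is m'.+1 then
    fix H (n : nat) : F := if n is n'.+1 then G m' n'.+1 + q ^+ m'.+1 * (H n' + t * G m' n') else 1
  else fun _ => 1.

Lemma GSS m n : G m.+1 n.+1 = G m n.+1 + q ^+ m.+1 * (G m.+1 n + t * G m n).
Proof. by []. Qed.

Lemma G_C m n N : (m + n <= M)%N -> (n < N)%N -> G m n = \sum_(k < N) t ^+ k * C m n k.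
Proof.
elim: m n N => [|m IHm] n N hM hN.
  case: N hN => // N hN; rewrite big_ord_recl big1 => [|i _]; last by rewrite C_0 ?mulr0.
  rewrite /C !leq0n /= subn0 /X /= ?add0n ?addn0 P0 ?mulr1 ?mul1r ?addr0 divff //; apply: Pnz; lia.
elim: n N hM hN => [|n IHn] N hM hN.
  case: N hN => // N hN; rewrite big_ord_recl big1 => [|i _]; last by rewrite C_0 ?mulr0 // lift0 orbT.
  rewrite /C !leq0n /= subn0 /X /= ?add0n ?addn0 P0 ?mulr1 ?mul1r ?addr0 divff //; apply: Pnz; lia.
case: N hN => // N hN.
have hM' : (m + n + 2 <= M)%N by lia.
rewrite GSS (IHm n.+1 N.+1) ?(IHn N.+1) ?(IHm n N) //; try lia.
have hD : \sum_(k < N.+1) t ^+ k * (if nat_of_ord k is k'.+1 then C m n k' else 0)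
    = t * \sum_(k < N) t ^+ k * C m n k.
  rewrite big_ord_recl /= mulr0 add0r mulr_sumr; apply: eq_bigr => i _.
  by rewrite ?lift0 exprS mulrA.
rewrite -hD -big_split mulr_sumr -big_split /=; apply: eq_bigr => k _.
rewrite Crec //; set D := match _ with 0%N => _ | _.+1 => _ end; ring.
Qed.

Fixpoint qT' (k : nat) : F := if k is k'.+1 then qT' k' * q ^+ k' else 1.
Lemma qT_qT' k : qT k = qT' k * q ^+ k.
Proof. elim: k => [|k IH] /=; first by rewrite mul1r expr0. by rewrite IH !exprS; ring. Qed.
Lemma qT'nz k : qT' k != 0.
Proof. elim: k => [|k IH] /=; first exact: oner_neq0. by rewrite mulf_neq0 // expf_neq0. Qed.

Lemma qpochS a k : qpoch a q k.+1 = qpoch a q k * (1 - a * q ^+ k).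
Proof. by rewrite /qpoch big_ord_recr. Qed.

Ltac sidec2 := repeat (apply/andP; split); try apply: expf_neq0; first [ apply: qT'nz | exact: hq0 | apply: Pnz; lia | apply: facnz; lia | by rewrite invr_eq0 expf_neq0 | by rewrite oppr_eq0 oner_eq0 | idtac ].

Lemma qpoch_inv N k : (k <= N)%N -> (N <= M)%N ->
  qpoch (q ^- N) q k = (-1) ^+ k * qT' k * (q ^- N) ^+ k * P N / P (N - k).
Proof.
elim: k => [|k IH] hk hN.
  by rewrite /qpoch big_ord0 subn0 !expr0 !mul1r divff //; apply: Pnz.
rewrite qpochS IH; try lia.
have [d eN] : exists d, N = (k.+1 + d)%N by exists (N - k.+1)%N; lia.
have -> : (N - k = d.+1)%N by lia.
have -> : (N - k.+1 = d)%N by lia.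
rewrite PS /= !exprS.
set w := (q ^- N) ^+ k.
rewrite eN exprD !exprS.
field; sidec2.
Qed.

Lemma qpoch_zero N k : (N < k)%N -> qpoch (q ^- N) q k = 0.
Proof.
elim: k => // k IH; rewrite ltnS leq_eqVlt => /orP[/eqP <-|h]; rewrite qpochS.
  by rewrite mulVf ?subrr ?mulr0 // expf_neq0.
by rewrite IH // mul0r.
Qed.

Lemma RHS_C m n : (m + n <= M)%N ->
  gauss_binom q m n * phi21 n (q ^- n) (q ^- m) (q ^- (n + m)) q (- (t * q)) =
  \sum_(k < n.+1) t ^+ k * C m n k.
Proof.
move=> hM; rewrite /phi21 mulr_sumr; apply: eq_bigr => [[k hk]] _ /=.
case: (leqP k m) => km; last by rewrite C_0 ?km // (@qpoch_zero m) // !mulr0 !mul0r !mulr0.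
have kn : (k <= n)%N by lia.
rewrite /C km kn /= !qpoch_inv; try lia.
rewrite /gauss_binom /X qT_qT'.
have -> : (n - k + (m - k) + k = n + m - k)%N by lia.
rewrite (addnC m n) exprD (invfM (q ^+ n)) exprMn (exprNn (t * q)) exprMn.
have hS : (-1) ^+ k * (-1) ^+ k = 1 :> F.
  by rewrite -exprD -signr_odd oddD addbb.
rewrite -[RHS]mul1r -[in RHS]hS.
field; sidec2.
Qed.
End Alg.

Fixpoint E (n b : nat) : seq (seq nat) :=
  if n is n'.+1 then [seq h :: s | h <- iota 0 b.+1, s <- E n' h] else [:: [::]].

Lemma geq_trans' : transitive geq.
Proof. by move=> y x z h1 h2; exact: leq_trans h2 h1. Qed.

Lemma ES n b : E n.+1 b = [seq h :: s | h <- iota 0 b.+1, s <- E n h].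
Proof. by []. Qed.

Lemma memE n b s : (s \in E n b) = [&& size s == n, all (fun x => x <= b)%N s & sorted geq s].
Proof.
elim: n b s => [|n IH] b [|h s]; rewrite ?ES.
- by rewrite inE.
- by rewrite inE.
- by apply/negbTE/allpairsPdep => -[x [y [_ _ ]]].
rewrite [in RHS]/= (path_sortedE geq_trans') eqSS.
apply/allpairsPdep/idP.
  case=> x [y [hx hy [-> ->]]].
  move: hx hy; rewrite IH mem_iota => /andP[_ hx] /and3P[-> ay ->].
  rewrite andbT -ltnS hx /=; apply/andP; split => //.
  by apply: sub_all ay => z hz; exact: leq_trans hz _.
case/and3P=> sz /andP[hb ab] /andP[ah sh].
exists h, s; split => //; first by rewrite mem_iota.
by rewrite IH sz sh andbT.
Qed.

Lemma uniqE n b : uniq (E n b).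
Proof.
elim: n b => [|n IH] b //; rewrite ES.
apply: allpairs_uniq_dep => //; first exact: iota_uniq.
by move=> [x y] [x' y'] _ _ /= [-> ->].
Qed.

Lemma E_split n b : E n.+1 b.+1 = E n.+1 b ++ [seq b.+1 :: s | s <- E n b.+1].
Proof. by rewrite !ES -addn1 iotaD map_cat flatten_cat /= cats0. Qed.

Lemma E0 n : E n 0 = [:: nseq n 0%N].
Proof. by elim: n => //= n ->. Qed.

Section Comb.
Variable F : fieldType.
Variables q t : F.
Variable m : nat.

Definition w (s : seq nat) : F :=
  q ^+ sumn s * \prod_(i < m.+1 | (0 < i)%N && (nat_of_ord i \in s)) (1 + t).

Lemma w_cons b s : (0 < b <= m)%N ->
  w (b :: s) = q ^+ b * w s * (if b \in s then 1 else 1 + t).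
Proof.
move=> /andP[b0 bm]; rewrite /w /= exprD -!mulrA; congr (_ * (_ * _)).
case: ifP => bs.
  rewrite mulr1; apply: eq_bigl => i; rewrite inE.
  by case: eqP => // ->; rewrite bs b0.
rewrite (bigD1 (inord b)) /=; last by rewrite inordK ?ltnS // b0 inE eqxx.
rewrite mulrC; congr (_ * _); apply: eq_bigl => i.
rewrite inE -val_eqE /= inordK ?ltnS //.
case: eqP => [->|_]; first by rewrite bs !andbF.
by rewrite /= andbT.
Qed.

Definition A n b := \sum_(s <- E n b) w s.

Lemma filt n b : \sum_(s <- E n b.+1 | b.+1 \notin s) w s = A n b.
Proof.
case: n => [|n]; first by rewrite /A /= !big_cons !big_nil.
rewrite E_split big_cat /= big_map [X in _ + X]big_pred0 ?addr0; last by move=> s /=; rewrite inE eqxx.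
rewrite /A big_seq_cond [RHS]big_seq; apply: eq_bigl => s.
apply/andP/idP => [[]//|hs]; split => //.
apply/negP => hb; move: hs; rewrite memE => /and3P[_ /allP /(_ _ hb)].
by rewrite ltnn.
Qed.

Lemma A_G n b : (b <= m)%N -> A n b = G q t b n.
Proof.
elim: b n => [|b IHb] n hb.
  rewrite /A E0 big_seq1 /w sumn_nseq mul0n expr0 mul1r big_pred0; first by case: n.
  by move=> i /=; rewrite mem_nseq; case: eqP => [->|]; rewrite ?andbF.
have hb' : (0 < b.+1 <= m)%N by [].
elim: n => [|n IHn].
  by rewrite /A /= big_seq1 /w /= expr0 mul1r big_pred0 // => i; rewrite in_nil andbF.
rewrite GSS /A E_split big_cat big_map -/(A n.+1 b) IHb; last by lia.
congr (_ + _).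
under eq_bigr => s _ do rewrite (w_cons _ hb').
rewrite -IHn -(IHb n) -?(filt n b); last by lia.
rewrite /A mulr_sumr (big_mkcond (fun s => b.+1 \notin s)) -big_split mulr_sumr /=.
apply: eq_bigr => s _; case: (b.+1 \in s) => /=; ring.
Qed.
End Comb.

Lemma sum_subset_pow (F : fieldType) (I : finType) (B : {set I}) (t : F) :
  \sum_(S : {set I} | S \subset B) t ^+ #|S| = (1 + t) ^+ #|B|.
Proof.
rewrite -prodr_const big_mkcond /=.
transitivity (\prod_(i : I) ((if i \in B then t else 0) + 1)).
  rewrite bigA_distr /= [RHS]big_mkcond /=; apply: eq_bigr => S _.
  case: ifP => hS.
    rewrite -prodr_const big_mkcond /=; apply: eq_bigr => i _.
    by case: ifP => // iS; rewrite (subsetP hS).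
  have [i iS iB] : exists2 i, i \in S & i \notin B.
    by apply/exists_inP; apply: contraFT hS => /exists_inPn H; apply/subsetP => x /H /negPn.
  by rewrite (bigD1 i) //= iS (negbTE iB) mul0r.
by rewrite [RHS]big_mkcond; apply: eq_bigr => i _; case: ifP => _; [rewrite addrC | rewrite add0r].
Qed.

Lemma memT m n (s : seq nat) :
  (s \in map (fun l : n.-tuple 'I_m.+1 => map val l) (index_enum (n.-tuple 'I_m.+1))) = (size s == n) && all (fun x => x <= m)%N s.
Proof.
apply/mapP/andP.
  move=> [l _ ->]; rewrite size_map size_tuple; split => //.
  by apply/allP => x /mapP[i _ ->]; rewrite -ltnS ltn_ord.
move=> [/eqP sz /allP ha].
have hs : size (map (@inord m) s) == n by rewrite size_map sz.
exists (Tuple hs); first by rewrite mem_index_enum.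
rewrite /= -map_comp map_id_in // => x /ha /= hx; by rewrite inordK.
Qed.

Lemma overpart_A (F : fieldType) (q t : F) m n : overpart_gf m n q t = A q t m n m.
Proof.
rewrite /overpart_gf.
transitivity (\sum_(l : n.-tuple 'I_m.+1 | sorted geq (map val l)) w q t m (map val l)).
  apply: eq_bigr => l _.
  rewrite -mulr_suml.
  set B := [set i : 'I_m.+1 | (0 < val i)%N && (i \in l)].
  have hP : forall S : {set 'I_m.+1}, [forall s in S, (0 < val s)%N && (s \in l)] = (S \subset B).
    move=> S; apply/forall_inP/subsetP => H x.
      by move=> /H; rewrite inE.
    by move=> /H; rewrite inE.
  transitivity ((\sum_(S : {set 'I_m.+1} | S \subset B) t ^+ #|S|) * q ^+ (\sum_(i <- l) val i)%N).
    by congr (_ * _); apply: eq_bigl => S; apply: hP.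
  rewrite sum_subset_pow /w mulrC; congr (_ * _).
    by rewrite sumnE big_map.
  rewrite -prodr_const; apply: eq_bigl => i; rewrite inE mem_map //; exact: val_inj.
rewrite /A -(big_map (fun l : n.-tuple 'I_m.+1 => map val l) (fun s => sorted geq s) (w q t m)) -big_filter.
apply: perm_big; apply: uniq_perm.
- rewrite filter_uniq // map_inj_uniq ?index_enum_uniq //.
  by move=> l1 l2 /(inj_map val_inj) /val_inj.
- exact: uniqE.
move=> s; rewrite mem_filter memE memT.
by rewrite andbC -andbA.
Qed.

Theorem proposition2p4 (F : fieldType) (m n : nat) (q t : F) :
  (0 < m)%N -> (0 < n)%N -> q != 0 ->
  (forall j : nat, (0 < j <= m + n)%N -> q ^+ j != 1) ->
  overpart_gf m n q t =
  gauss_binom q m n * phi21 n (q ^- n) (q ^- m) (q ^- (n + m)) q (- (t * q)).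
Proof.
move=> m0 n0 hq0 hq.
rewrite overpart_A A_G // (G_C t hq0 hq (N := n.+1)) // (RHS_C t hq0 hq) //.
Qed.
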